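(* Let $L>0$, $\tau>0$ and let $Z_1,\dots,Z_m$ be random variables with $\max_{1\le j\le m}\|Z_j\|_{\Psi_2(\cdot;L)}\le\tau$. Then for all $t>0$, $$P\Big(\max_{1\le j\le m}|Z_j|\ge \frac{\tau}{L}\Big(h_2^{-1}(L^2t/2)+h_2^{-1}\big(L^2\log(1+m)/2\big)\Big)\Big)\le 2e^{-t}.$$
   Context: For $x\ge 0$ let $h_2(x)=(1+x)\log(1+x)-x$, an increasing bijection of $[0,\infty)$ onto itself, with inverse $h_2^{-1}$. For $L>0$ let $\Psi_2(x;L)=\exp\big(\frac{2}{L^2}h_2(Lx)\big)-1$. The Orlicz norm is $\|X\|_{\Psi}=\inf\{c>0: E\Psi(|X|/c)\le 1\}$. *)

(* Defs.v *)
From HB Require Import structures.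
From mathcomp Require Import all_boot all_order all_algebra.
From mathcomp Require Import all_classical all_reals all_analysis.
Set Implicit Arguments. Unset Strict Implicit. Unset Printing Implicit Defensive.
Import Order.TTheory GRing.Theory Num.Theory.
Local Open Scope classical_set_scope.
Local Open Scope ring_scope.

Definition h2 {R : realType} (x : R) : R := (1 + x) * ln (1 + x) - x.

(* h_2^{-1}: the inverse of the bijection h_2 : [0,oo) -> [0,oo);
   h2inv y is the (unique) x >= 0 with h2 x = y (default 0 if none). *)
Definition h2inv {R : realType} (y : R) : R :=
  xget 0 [set x : R | 0 <= x /\ h2 x = y].

Definition Psi2 {R : realType} (L x : R) : R :=
  expR (2 / L ^+ 2 * h2 (L * x)) - 1.

(* Orlicz norm ||X||_Psi = inf { c > 0 : E Psi(|X|/c) <= 1 } (in \bar R; inf of empty set = +oo) *)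
Definition orlicz_norm {R : realType} {d} {T : measurableType d}
  (P : probability T R) (Psi : R -> R) (X : T -> R) : \bar R :=
  ereal_inf [set (c%:E) | c in [set c : R | 0 < c /\
     (\int[P]_x (Psi (`|X x| / c))%:E <= 1)%E]].

(* Main.v *)
Require Import Defs.
From HB Require Import structures.
From mathcomp Require Import all_boot all_order all_algebra.
From mathcomp Require Import all_classical all_reals all_analysis.
From mathcomp Require Import ring lra.
Import Order.TTheory GRing.Theory Num.Theory.
Import numFieldNormedType.Exports.
Local Open Scope classical_set_scope.
Local Open Scope ring_scope.

Section H.
Variable R : realType.
Implicit Types x y z a b p q : R.

Lemma ln_le_sub1 x : 0 < x -> ln x <= x - 1.
Proof.
move=> x0; have := expR_ge1Dx (ln x); rewrite lnK ?posrE //; lra.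
Qed.

Lemma ln_diff p q : 0 < p -> 0 < q -> q * (ln p - ln q) <= p - q.
Proof.
move=> p0 q0; rewrite -ln_div ?posrE //.
have := ln_le_sub1 _ (divr_gt0 p0 q0) => h.
have : q * ln (p / q) <= q * (p / q - 1) by rewrite ler_pM2l.
by rewrite mulrBr mulrCA divff ?gt_eqF // mulr1 mulr1.
Qed.

Lemma h2_0 : h2 (0 : R) = 0.
Proof. by rewrite /h2 addr0 ln1 mulr0 subr0. Qed.

Lemma h2_mono y z : 0 <= z -> z <= y -> h2 z <= h2 y.
Proof.
move=> z0 zy; rewrite /h2.
have h := ln_diff (1 + z) (1 + y) ltac:(lra) ltac:(lra).
have l0 : 0 <= ln (1 + z) by apply: ln_ge0; lra.
nra.
Qed.

Lemma h2_ge0 y : 0 <= y -> 0 <= h2 y.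
Proof. by move=> y0; rewrite -h2_0 h2_mono. Qed.

Lemma h2_lb y z : 0 <= z -> z <= y -> h2 y - (y - z) * y <= h2 z.
Proof.
move=> z0 zy; rewrite /h2.
have h := ln_diff (1 + y) (1 + z) ltac:(lra) ltac:(lra).
have l1 := ln_le_sub1 (1 + y) ltac:(lra).
nra.
Qed.

Lemma h2_superadd_aux a b : 0 <= b -> b <= a -> h2 a + h2 b <= h2 (a + b).
Proof.
move=> b0 ba; rewrite /h2.
have h1 := ln_diff (1 + a) (1 + a + b) ltac:(lra) ltac:(lra).
have h2 := ln_diff (1 + b) (1 + a + b) ltac:(lra) ltac:(lra).
have h3 := ln_le_sub1 (1 + b) ltac:(lra).
have -> : 1 + (a + b) = 1 + a + b by rewrite addrA.
set A := ln (1 + a + b) in h1 h2 *; set B := ln (1 + a) in h1 *; set C := ln (1 + b) in h2 h3 *.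
have w0 : 0 < 1 + a + b by lra.
suff : 0 <= (1 + a + b) * ((1 + a + b) * A - (1 + a) * B - (1 + b) * C).
  rewrite pmulr_rge0 //; lra.
nra.
Qed.

Lemma h2_superadd a b : 0 <= a -> 0 <= b -> h2 a + h2 b <= h2 (a + b).
Proof.
move=> a0 b0; case: (leP b a) => ba; first exact: h2_superadd_aux.
rewrite addrC [a + b]addrC; apply: h2_superadd_aux; lra.
Qed.
End H.
Section H2.
Variable R : realType.
Lemma h2_cont (x : R) : 0 <= x -> {for x, continuous (@h2 R)}.
Proof.
move=> x0; rewrite /h2.
apply: continuousB; last exact: cvg_id.
apply: continuousM; first by apply: continuousD; [exact: cvg_cst | exact: cvg_id].
apply: continuous_comp; first by apply: continuousD; [exact: cvg_cst | exact: cvg_id].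
apply: continuous_ln; rewrite /=; lra.
Qed.

Lemma h2_big (v : R) : 0 <= v -> v <= h2 (v + expR 2).
Proof.
move=> v0; rewrite /h2.
have e0 := expR_gt0 (2 : R).
have : 2 <= ln (1 + (v + expR 2)).
  rewrite -[X in X <= _](expRK (2:R)) ler_ln ?posrE; lra.
nra.
Qed.

Lemma h2inv_spec (v : R) : 0 <= v -> 0 <= h2inv v /\ h2 (h2inv v) = v.
Proof.
move=> v0; rewrite /h2inv.
apply: (xgetPex 0 (P := [set x : R | 0 <= x /\ h2 x = v])).
have e0 := expR_gt0 (2 : R).
have i1 : (0:R) <= v + expR 2 by lra.
have i2 : {within `[0, v + expR 2], continuous (@h2 R)}.
  apply: continuous_in_subspaceT => y; rewrite inE /= in_itv /= => /andP[y0 _].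
  exact: h2_cont.
have i3 : Num.min (h2 0) (h2 (v + expR 2)) <= v <= Num.max (h2 0) (h2 (v + expR 2)).
  rewrite h2_0; have := h2_big _ v0 => hb.
  rewrite ge_min le_max; apply/andP; split; apply/orP; by [left | right].
have [c cin hc] := IVT i1 i2 i3.
exists c; split => //; move: cin; rewrite in_itv /= => /andP[] //.
Qed.
End H2.

Lemma h2_meas (R : realType) : measurable_fun [set: R] (@h2 R).
Proof.
rewrite /h2; apply: measurable_realfun.measurable_funB; last exact: measurable_id.
apply: measurable_realfun.measurable_funM; first by apply: measurable_realfun.measurable_funD; [exact: measurable_cst | exact: measurable_id].
apply: measurableT_comp; first exact: measurable_realfun.measurable_ln.
by apply: measurable_realfun.measurable_funD; [exact: measurable_cst | exact: measurable_id].
Qed.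

Lemma Psi2_ge0 (R : realType) (L y : R) : 0 < L -> 0 <= y -> 0 <= Psi2 L y.
Proof.
move=> L0 y0; rewrite /Psi2 subr_ge0 -expR0 ler_expR.
apply: mulr_ge0; first by apply: divr_ge0 => //; apply: exprn_ge0; exact: ltW.
apply: h2_ge0; exact: mulr_ge0 (ltW L0) y0.
Qed.

Lemma markov_step (R : realType) d (T : measurableType d) (P : probability T R)
  (X : {RV P >-> R}) (L c s : R) : 0 < L -> 0 < c -> 0 < s ->
  (\int[P]_x (Psi2 L (`|X x| / c))%:E <= 1)%E ->
  ((Psi2 L (s / c) + 1)%:E * P [set x | (s <= `|X x|)%R] <= 2)%E.
Proof.
move=> L0 c0 s0 hint.
pose f (r : R) := Psi2 L (`|r| / c) + 1.
have mg : measurable_fun [set: R] (fun r => Psi2 L (`|r| / c)).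
  rewrite /Psi2.
  apply: measurable_realfun.measurable_funB; last exact: measurable_cst.
  apply: measurableT_comp; first exact: measurable_realfun.measurable_expR.
  apply: measurable_realfun.measurable_funM; first exact: measurable_cst.
  apply: measurableT_comp; first exact: h2_meas.
  apply: measurable_realfun.measurable_funM; first exact: measurable_cst.
  apply: measurable_realfun.measurable_funM; first exact: measurable_realfun.normr_measurable.
  exact: measurable_cst.
have mf : measurable_fun [set: R] f.
  by apply: measurable_realfun.measurable_funD => //; exact: measurable_cst.
have f0 : forall r, 0 <= r -> 0 <= f r.
  move=> r _; rewrite /f; apply: addr_ge0 => //; apply: Psi2_ge0 => //.
  by apply: divr_ge0 => //; exact: ltW.
have fnd : {in Num.nneg &, {homo f : x y / x <= y}}.
  move=> x y x0 y0 xy; idtac; rewrite /f lerD2r /Psi2 lerD2r ler_expR.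
  apply: ler_wpM2l; first by apply: divr_ge0 => //; apply: exprn_ge0; exact: ltW.
  apply: h2_mono.
    by apply: mulr_ge0; [exact: ltW | apply: divr_ge0 => //; exact: ltW].
  apply: ler_wpM2l; first exact: ltW.
  by apply: ler_wpM2r; [rewrite invr_ge0 ltW | rewrite !ger0_norm].
have := markov X s0 mf f0 fnd.
have -> : [set x | (s%:E <= `|(X x)%:E|)%E] = [set x | s <= `|X x|].
  by apply/seteqP; split => x /=; rewrite lee_fin.
have -> : f s = Psi2 L (s / c) + 1 by rewrite /f gtr0_norm.
move/le_trans; apply.
rewrite unlock /=.
under eq_integral => x _ do rewrite /f normr_id EFinD.
rewrite ge0_integralD //.
- have := integral_cst P measurableT 1; rewrite /= probability_setT mule1 => ->.
  have -> : (2 = 1 + 1 :> \bar R)%E by [].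
  by rewrite leeD2r.
- by move=> x _; rewrite lee_fin; apply: Psi2_ge0 => //; apply: divr_ge0 => //; exact: ltW.
- apply/measurable_realfun.measurable_EFinP; apply: (measurableT_comp mg) => //.
Qed.

Lemma h2z_bound (R : realType) (L tau y c kap : R) : 0 < L -> 0 < tau -> 0 < y -> 0 < c ->
  0 < kap -> c < tau + kap * L ^+ 2 * tau / (2 * y ^+ 2) ->
  h2 y - kap * L ^+ 2 / 2 <= h2 (tau * y / c).
Proof.
move=> L0 t0 y0 c0 k0 hc.
have kL : 0 < kap * L ^+ 2 by apply: mulr_gt0 => //; exact: exprn_gt0.
have z0 : 0 <= tau * y / c by apply: divr_ge0; [apply: mulr_ge0; exact: ltW | exact: ltW].
case: (leP c tau) => ct.
- apply: le_trans _ (@h2_mono R (tau * y / c) y (ltW y0) _).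
    have : 0 <= kap * L ^+ 2 / 2 by apply: divr_ge0 => //; exact: ltW.
    lra.
  rewrite ler_pdivlMr //; nra.
- have zy : tau * y / c <= y.
    rewrite ler_pdivrMr //; nra.
  apply: le_trans _ (@h2_lb R _ _ z0 zy).
  rewrite lerD2l lerN2.
  have e1 : (y - tau * y / c) * y = y ^+ 2 * (c - tau) / c.
    by field; rewrite gt_eqF.
  rewrite e1 ler_pdivrMr //.
  have y2 : 0 < y ^+ 2 by exact: exprn_gt0.
  have : y ^+ 2 * (c - tau) <= kap * L ^+ 2 * tau / 2.
    have : c - tau <= kap * L ^+ 2 * tau / (2 * y ^+ 2) by lra.
    move/(ler_wpM2l (ltW y2)).
    have -> : y ^+ 2 * (kap * L ^+ 2 * tau / (2 * y ^+ 2)) = kap * L ^+ 2 * tau / 2.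
      by field; rewrite gt_eqF.
    by [].
  move=> h; apply: (le_trans h).
  have : 0 <= kap * L ^+ 2 by exact: ltW.
  nra.
Qed.

Lemma per_j (R : realType) d (T : measurableType d) (P : probability T R)
  (X : {RV P >-> R}) (L tau y t : R) (m : nat) : 0 < L -> 0 < tau -> 0 < y -> (0 < m)%N ->
  L ^+ 2 * t / 2 + L ^+ 2 * ln (1 + m%:R) / 2 <= h2 y ->
  (orlicz_norm P (Psi2 L) X <= tau%:E)%E ->
  (P [set x | (tau / L * y <= `|X x|)%R] <= (2 * expR (- t) / m%:R)%:E)%E.
Proof.
move=> L0 t0 y0 m0 hy hn.
have mR : (0 : R) < m%:R by rewrite ltr0n.
pose kap : R := ln (1 + m%:R) - ln m%:R.
have k0 : 0 < kap.
  rewrite /kap subr_gt0 ltr_ln ?posrE; lra.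
have L2 : 0 < L ^+ 2 by exact: exprn_gt0.
have y2 : 0 < y ^+ 2 by exact: exprn_gt0.
pose eps := kap * L ^+ 2 * tau / (2 * y ^+ 2).
have e0 : 0 < eps.
  rewrite /eps; apply: divr_gt0; last by apply: mulr_gt0.
  by apply: mulr_gt0 => //; apply: mulr_gt0.
have : (orlicz_norm P (Psi2 L) X < (tau + eps)%:E)%E.
  by apply: (le_lt_trans hn); rewrite lte_fin; lra.
rewrite /orlicz_norm => /ereal_inf_lt [e [c [c0 hint] <-]]; rewrite lte_fin => hc.
have s0 : 0 < tau / L * y by apply: mulr_gt0 => //; apply: divr_gt0.
have M := @markov_step R d T P X L c _ L0 c0 s0 hint.
have hz := @h2z_bound R L tau y c kap L0 t0 y0 c0 k0 hc.
have key : m%:R * expR t <= Psi2 L (tau / L * y / c) + 1.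
  rewrite /Psi2 subrK.
  have -> : L * (tau / L * y / c) = tau * y / c by field; rewrite !gt_eqF.
  rewrite -[X in X * _](@lnK R m%:R) ?posrE // -expRD ler_expR.
  have : 2 / L ^+ 2 * (h2 y - kap * L ^+ 2 / 2) <= 2 / L ^+ 2 * h2 (tau * y / c).
    by apply: ler_wpM2l => //; apply: divr_ge0 => //; exact: ltW.
  apply: le_trans.
  have -> : 2 / L ^+ 2 * (h2 y - kap * L ^+ 2 / 2) = 2 / L ^+ 2 * h2 y - kap.
    by field; rewrite gt_eqF.
  have : 2 / L ^+ 2 * (L ^+ 2 * t / 2 + L ^+ 2 * ln (1 + m%:R) / 2) <= 2 / L ^+ 2 * h2 y.
    by apply: ler_wpM2l => //; apply: divr_ge0 => //; exact: ltW.
  have -> : 2 / L ^+ 2 * (L ^+ 2 * t / 2 + L ^+ 2 * ln (1 + m%:R) / 2) = t + ln (1 + m%:R).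
    by field; rewrite gt_eqF.
  rewrite /kap; lra.
have K0 : 0 < Psi2 L (tau / L * y / c) + 1.
  by apply: lt_le_trans key; apply: mulr_gt0 => //; exact: expR_gt0.
rewrite -(lee_pdivlMl _ _ K0) in M.
apply: (le_trans M).
rewrite -EFinM lee_fin.
rewrite expRN.
have et : 0 < expR t := expR_gt0 t.
rewrite -[X in _ <= X]mulrA -invfM mulrC [expR t * _]mulrC.
apply: ler_wpM2l => //.
by rewrite lef_pV2 ?posrE //; apply: mulr_gt0.
Qed.

Theorem lemma9 (R : realType) (d : measure_display) (T : measurableType d)
  (P : probability T R) (m : nat) (Z : 'I_m -> {RV P >-> R}) (L tau : R) :
  0 < L -> 0 < tau ->
  (forall j : 'I_m, (orlicz_norm P (Psi2 L) (Z j) <= tau%:E)%E) ->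
  forall t : R, 0 < t ->
  (P [set x | (tau / L * (h2inv (L ^+ 2 * t / 2) + h2inv (L ^+ 2 * ln (1 + m%:R) / 2))
              <= \big[Num.max/0]_(j < m) `|Z j x|)%R ]
   <= (2 * expR (- t))%:E)%E.
Proof.
move=> L0 tau0 hZ t t0.
have L2 : 0 < L ^+ 2 by exact: exprn_gt0.
have va0 : 0 < L ^+ 2 * t / 2 by apply: divr_gt0 => //; apply: mulr_gt0.
have lnm0 : 0 <= ln (1 + m%:R :> R) by apply: ln_ge0; rewrite lerDl.
have vb0 : 0 <= L ^+ 2 * ln (1 + m%:R) / 2.
  by apply: divr_ge0 => //; apply: mulr_ge0 => //; exact: ltW.
have [a0 ha] := @h2inv_spec R _ (ltW va0).
have [b0 hb] := @h2inv_spec R _ vb0.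
set a := h2inv (L ^+ 2 * t / 2) in a0 ha *.
set b := h2inv (L ^+ 2 * ln (1 + m%:R) / 2) in b0 hb *.
have apos : 0 < a.
  rewrite lt_neqAle a0 andbT; apply/eqP => a_eq.
  by move: ha; rewrite -a_eq h2_0 => h; move: va0; rewrite -h ltxx.
have hy : L ^+ 2 * t / 2 + L ^+ 2 * ln (1 + m%:R) / 2 <= h2 (a + b).
  by rewrite -{1}ha -{1}hb h2_superadd // ltW.
have ypos : 0 < a + b by lra.
move: (a + b) ypos hy => y ypos hy.
have s0 : 0 < tau / L * y by apply: mulr_gt0 => //; apply: divr_gt0.
have et : 0 <= 2 * expR (- t) by apply: mulr_ge0 => //; exact: expR_ge0.
clear lnm0 vb0 hb b0 ha a0 b apos a; case: m Z hZ hy => [|n] Z hZ hy.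
  have -> : [set x | tau / L * y <= \big[Num.max/0]_(j < 0) `|Z j x|] = set0.
    by apply/seteqP; split => x //=; rewrite big_ord0 => h; lra.
  by rewrite measure0 lee_fin.
pose F (k : nat) := [set x | tau / L * y <= `|Z (inord k) x|].
have mF : forall k, measurable (F k).
  move=> k.
  have mf : measurable_fun [set: T] (fun x => `|Z (inord k) x|).
    apply: measurableT_comp; first exact: measurable_realfun.normr_measurable.
    exact: measurable_funPT.
  have := mf measurableT _ (measurable_itv `[tau / L * y, +oo[); rewrite setTI.
  congr measurable; apply/seteqP; split => x /=; rewrite in_itv /= andbT //.
have E : [set x | tau / L * y <= \big[Num.max/0]_(j < n.+1) `|Z j x|] =
         \big[setU/set0]_(k < n.+1) F k.
  apply/seteqP; split => x /=.
  - move=> h; rewrite -bigcup_mkord.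
    apply: contrapT => hn.
    have : \big[Num.max/0]_(j < n.+1) `|Z j x| < tau / L * y.
      apply: bigmax_lt => // j _.
      rewrite ltNge; apply/negP => hj; apply: hn; exists j => //=.
      by rewrite /F inord_val.
    by rewrite ltNge h.
  - rewrite -bigcup_mkord => -[k /= kn]; rewrite /F => h.
    apply: (le_trans h).
    have := le_bigmax 0 (fun j : 'I_n.+1 => `|Z j x|) (inord k); rewrite /=.
    by [].
rewrite E.
apply: (le_trans (@content_subadditive _ _ _ P _ F n.+1 _ _ _)).
- by move=> k _; exact: mF.
- by apply: bigsetU_measurable => k _; exact: mF.
- by [].
apply: (@le_trans _ _ (\sum_(k < n.+1) (2 * expR (- t) / n.+1%:R)%:E)%E).
  apply: lee_sum => k _; rewrite /F inord_val.
  exact: per_j.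
rewrite sumEFin lee_fin sumr_const card_ord -(mulr_natr (2 * expR (- t) / n.+1%:R)) divfK //.
Qed.
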